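(* Let $n\ge 2$, $\ell\ge 1$, and let $\mathcal{L}\in\mathcal{A}(n,n-2,\ell)$. For every $1\le j\le n$, the word $W_j=\mathbf{1}-\mathbf{e}_j$ can be covered only by a codeword of the form $\mathbf{1}-\lambda\mathbf{e}_j$ with $\lambda$ an integer, $1\le\lambda\le\ell+1$.
   Context: $\mathcal{S}(n,t,\ell)=\{\mathcal{E}\in\mathbb{Z}^n: 0\le\varepsilon_i\le\ell \text{ for all } i,\ w_H(\mathcal{E})\le t\}$, with $w_H$ the number of nonzero coordinates. A lattice here is the set of integer combinations of $n$ linearly independent vectors of $\mathbb{Z}^n$. $\mathcal{A}(n,t,\ell)$ is the set of lattices $\mathcal{L}\subseteq\mathbb{Z}^n$ such that the translates $X+\mathcal{S}(n,t,\ell)$, $X\in\mathcal{L}$, are pairwise disjoint; elements of $\mathcal{L}$ are codewords. A codeword $X$ covers $Y\in\mathbb{Z}^n$ if $Y=X+\mathcal{E}$ for some $\mathcal{E}\in\mathcal{S}(n,n-2,\ell)$. $\mathbf{1}$ is the all-one vector and $\mathbf{e}_j$ the $j$-th unit vector. *)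

(* Defs.v *)
From mathcomp Require Import all_boot all_order all_algebra.
Set Implicit Arguments. Unset Strict Implicit. Unset Printing Implicit Defensive.
Import Order.TTheory GRing.Theory Num.Theory.
Local Open Scope ring_scope.

Definition wH (n : nat) (E : 'rV[int]_n) : nat := #|[set i : 'I_n | E 0 i != 0]|.

Definition inS (n t l : nat) (E : 'rV[int]_n) : Prop :=
  (forall i : 'I_n, 0 <= E 0 i <= l%:Z) /\ (wH E <= t)%N.

Definition is_lattice (n : nat) (L : 'rV[int]_n -> Prop) : Prop :=
  exists B : 'M[int]_n,
    (forall c : 'rV[int]_n, c *m B = 0 -> c = 0) /\
    (forall X, L X <-> exists c : 'rV[int]_n, X = c *m B).

Definition in_A (n t l : nat) (L : 'rV[int]_n -> Prop) : Prop :=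
  is_lattice L /\
  forall X Y E1 E2 : 'rV[int]_n, L X -> L Y -> X <> Y ->
    inS t l E1 -> inS t l E2 -> X + E1 <> Y + E2.

Definition covers (n l : nat) (X Y : 'rV[int]_n) : Prop :=
  exists E, inS (n - 2) l E /\ Y = X + E.

Definition ones (n : nat) : 'rV[int]_n := const_mx 1.
Definition unitv (n : nat) (j : 'I_n) : 'rV[int]_n := delta_mx 0 j.

(* Main.v *)
Require Import Defs.
From mathcomp Require Import all_boot all_order all_algebra.
From mathcomp Require Import zify.
Import Order.TTheory GRing.Theory Num.Theory.
Local Open Scope ring_scope.

Lemma Wentry n (j i : 'I_n) : (ones n - unitv j) 0 i = if i == j then 0 else 1.
Proof.
rewrite !mxE /=; case: (i == j); by rewrite ?subrr ?subr0.
Qed.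

Theorem mainTheorem16 (n l : nat) (L : 'rV[int]_n -> Prop) :
  (2 <= n)%N -> (1 <= l)%N -> in_A (n - 2) l L ->
  forall (j : 'I_n) (X : 'rV[int]_n),
    L X -> covers l X (ones n - unitv j) ->
    exists lam : int, 1 <= lam <= l%:Z + 1 /\ X = ones n - lam *: unitv j.
Proof.
move=> n2 l1 [[B [_ HB]] Hdis] j X LX [E [[Eb Ew] HW]].
have XE : forall i, X 0 i = (if i == j then 0 else 1) - E 0 i.
  by move=> i; rewrite -Wentry HW mxE addrK.
have L0 : L 0 by apply/HB; exists 0; rewrite mul0mx.
have Ez : forall k, k != j -> E 0 k = 0.
  move=> k kj; apply/eqP; apply/negPn/negP => Ek.
  have Xn0 : X <> 0.
    move=> X0.
    have : (n - 1 <= wH E)%N.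
      have -> : (n - 1)%N = #|~: [set j]| by rewrite cardsC1 card_ord; lia.
      apply: subset_leq_card; apply/subsetP => i; rewrite !inE => ij.
      have := XE i; rewrite X0 mxE (negbTE ij) => H.
      by apply/eqP => H'; move: H; rewrite H' subr0.
    lia.
  pose E1 : 'rV[int]_n := \row_i Num.max (- X 0 i) 0.
  pose E2 : 'rV[int]_n := \row_i Num.max (X 0 i) 0.
  apply: (Hdis X 0 E1 E2 LX L0 Xn0).
  - split.
    + move=> i; rewrite mxE; have := Eb i; have := XE i.
      case: (i == j) => ->; case: leP; lia.
    + apply: leq_trans Ew; apply: subset_leq_card; apply/subsetP => i.
      rewrite !inE mxE => Hi; apply/negP => /eqP Ei; move: Hi.
      have := XE i; rewrite Ei; case: (i == j) => ->; case: leP; lia.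
  - split.
    + move=> i; rewrite mxE; have := Eb i; have := XE i.
      case: (i == j) => ->; case: leP; lia.
    + have -> : (n - 2)%N = #|~: [set j; k]|.
        have := cardsC [set j; k]; rewrite cards2 eq_sym kj card_ord; lia.
      apply: subset_leq_card; apply/subsetP => i.
      rewrite !inE mxE => Hi; apply/negP => /orP [] /eqP Hij; move: Hi.
      * have := XE i; rewrite Hij eqxx; have := Eb j; case: leP; lia.
      * have := XE i; rewrite Hij (negbTE kj) => ->.
        move: Ek; have := Eb k; case: leP; lia.
  - apply/rowP => i; rewrite !mxE !maxEle; do 2 case: ifP; set x := X 0 i; move=> *; apply/eqP; lia.
exists (1 + E 0 j); split.
  have := Eb j; lia.
apply/rowP => i; rewrite XE !mxE.
case: (i =P j) => [->|/eqP ij]; first by rewrite eqxx /= mulr1; lia.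
by rewrite Ez // mulr0 !subr0.
Qed.
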